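(* Let $(\tilde\theta_n)_{n\ge0}$ be a sequence in $(0,\infty)^d$ satisfying, for some sequence $(X_n)_{n\ge1}$ in $\mathsf X$ and some sequence $(\gamma_n)_{n\ge1}$ of positive stepsizes, the recurrence $\tilde\theta_{n+1}(i)=\tilde\theta_n(i)\big(1+\gamma_{n+1}\frac{\rho(\theta_n(i))}{\theta_n(i)}\mathbf 1_{\mathsf X_i}(X_{n+1})\big)$ for all $i$ and $n\ge0$, where $\theta_n=\tilde\theta_n/\sum_{j=1}^d\tilde\theta_n(j)$. Then $$\theta_{n+1}=\theta_n+\gamma_{n+1}H(X_{n+1},\theta_n)+\gamma_{n+1}\Lambda_{n+1},$$ where $(\Lambda_n)_{n\ge1}$ is an $\mathbb R^d$-valued sequence satisfying $\sup_{n\ge0}\frac{|\Lambda_{n+1}|}{\gamma_{n+1}}\le\sqrt2\,\big(\sup_{(0,1)}\rho\big)^2$ (almost surely, when the sequences are random).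
   Context: $\mathsf X$ is a set partitioned into disjoint measurable strata $\mathsf X_1,\dots,\mathsf X_d$, with $I(x)=i$ iff $x\in\mathsf X_i$; $\Theta=\{\theta\in(0,1)^d:\sum_i\theta(i)=1\}$; $\rho:(0,1)\to(0,\infty)$ is measurable. The function $H:\mathsf X\times\Theta\to\mathbb R^d$ has components $H_i(x,\theta)=\rho(\theta(i))\mathbf 1_{\mathsf X_i}(x)-\theta(i)\rho(\theta(I(x)))$. $|\cdot|$ is the Euclidean norm. *)

(* Defs.v *)
From HB Require Import structures.
From mathcomp Require Import all_boot all_order all_algebra.
From mathcomp Require Import all_classical all_reals all_analysis.
Set Implicit Arguments. Unset Strict Implicit. Unset Printing Implicit Defensive.
Import Order.TTheory GRing.Theory Num.Theory.
Local Open Scope ring_scope.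

Definition eucl_norm (R : realType) (d : nat) (v : 'I_d -> R) : R :=
  Num.sqrt (\sum_(i < d) v i ^+ 2).

Definition normalize (R : realType) (d : nat) (t : 'I_d -> R) : 'I_d -> R :=
  fun i => t i / \sum_(j < d) t j.

(* Indicator 1_{X_i}(x), where X_i = I^{-1}(i). *)
Definition strat_ind (R : realType) (T : Type) (d : nat) (I : T -> 'I_d)
  (i : 'I_d) (x : T) : R := (I x == i)%:R.

Definition Hfun (R : realType) (T : Type) (d : nat) (I : T -> 'I_d)
  (rho : R -> R) (x : T) (th : 'I_d -> R) : 'I_d -> R :=
  fun i => rho (th i) * strat_ind R I i x - th i * rho (th (I x)).

(* Main.v *)
Require Import Defs.
From HB Require Import structures.
From mathcomp Require Import all_boot all_order all_algebra.
From mathcomp Require Import all_classical all_reals all_analysis.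
From mathcomp.algebra_tactics Require Import ring lra.
Import Order.TTheory GRing.Theory Num.Theory.
Local Open Scope classical_set_scope.
Local Open Scope ring_scope.

Lemma helper1 (R : realType) (d : nat) (hd : (1 < d)%N) (t : 'I_d -> R) (k : 'I_d)
  (ht : forall i, 0 < t i) : 0 < normalize t k < 1.
Proof.
have [j hj] : exists j : 'I_d, j != k.
  have h0 : (0 < d)%N by apply: ltn_trans hd.
  case: (eqVneq k (Ordinal h0)) => [->|h].
    by exists (Ordinal hd); rewrite -val_eqE.
  by exists (Ordinal h0); rewrite eq_sym.
rewrite /normalize (bigD1 k) //= (bigD1 j) //=.
have h1 : 0 <= \sum_(i < d | (i != k) && (i != j)) t i.
  by apply: sumr_ge0 => i _; apply: ltW.
have := ht k; have := ht j => hj' hk'.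
apply/andP; split; first by apply: divr_gt0 => //; lra.
by rewrite ltr_pdivrMr; lra.
Qed.

Lemma helper2 (R : realType) (d : nat) (rho : R -> R) (t t' : 'I_d -> R) (k : 'I_d) (g : R)
  (ht : forall i, 0 < t i) (hg : 0 < g) (hr : 0 <= rho (normalize t k))
  (hrec : forall i, t' i = t i * (1 + g * (rho (normalize t i) / normalize t i) * (k == i)%:R)) :
  eucl_norm (fun i => (normalize t' i - normalize t i
     - g * (rho (normalize t i) * (k == i)%:R - normalize t i * rho (normalize t k))) / g) / g
  <= Num.sqrt 2 * rho (normalize t k) ^+ 2.
Proof.
set S := \sum_(j < d) t j.
have S0 : 0 < S.
  rewrite /S (bigD1 k) //=.
  have : 0 <= \sum_(i < d | i != k) t i by apply: sumr_ge0 => i _; apply: ltW.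
  have := ht k; lra.
have thE i : normalize t i = t i / S by [].
set r := rho (normalize t k).
have t'E i : t' i = t i + g * S * rho (normalize t i) * (k == i)%:R.
  rewrite hrec thE; move: (rho _) => a; have := ht i => ti.
  field; apply/andP; split; apply: lt0r_neq0 => //.
have S'E : \sum_(j < d) t' j = S * (1 + g * r).
  rewrite (eq_bigr _ (fun i _ => t'E i)) big_split /= -/S.
  rewrite (bigD1 k) //= big1 => [|i /negbTE]; last by rewrite eq_sym => ->; rewrite mulr0.
  by rewrite eqxx mulr1 addr0 /r; ring.
have gr : 0 < 1 + g * r by rewrite /r; nra.
have th'E i : normalize t' i = (normalize t i + g * rho (normalize t i) * (k == i)%:R) / (1 + g * r).
  rewrite {1}/normalize S'E t'E thE; move: (rho _) => a.
  field; by rewrite (lt0r_neq0 gr) (lt0r_neq0 S0).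
pose H : 'I_d -> R := fun j => rho (normalize t j) * (k == j)%:R - normalize t j * r.
set c := g * r / (1 + g * r).
have LE i : (normalize t' i - normalize t i
     - g * (rho (normalize t i) * (k == i)%:R - normalize t i * r)) / g = - c * H i.
  rewrite th'E /c /H.
  field; by rewrite (lt0r_neq0 gr) (lt0r_neq0 hg).
have sum1 : \sum_(i < d) normalize t i = 1.
  by rewrite /normalize -mulr_suml -/S divff // lt0r_neq0.
have thb i : 0 <= normalize t i <= 1.
  rewrite thE; apply/andP; split; first by apply: divr_ge0; [apply: ltW|apply: ltW].
  rewrite ler_pdivrMr // mul1r /S (bigD1 i) //=.
  have : 0 <= \sum_(j < d | j != i) t j by apply: sumr_ge0 => j _; apply: ltW.
  lra.
have HS : \sum_(i < d) H i ^+ 2 <= 2 * r ^+ 2.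
  rewrite (bigD1 k) //=.
  have e1 : \sum_(i < d | i != k) normalize t i = 1 - normalize t k.
    by move: sum1; rewrite (bigD1 k) //=; lra.
  have e2 : \sum_(i < d | i != k) H i ^+ 2 <= \sum_(i < d | i != k) normalize t i * r ^+ 2.
    apply: ler_sum => i /negbTE; rewrite eq_sym /H => ->; rewrite mulr0 sub0r sqrrN.
    have := thb i; move: (normalize t i) => a /andP[a0 a1].
    rewrite exprMn; apply: ler_wpM2r; first by apply: sqr_ge0.
    nra.
  move: e2; rewrite -mulr_suml e1 /H eqxx mulr1 -/r.
  have := thb k; move: (normalize t k) => a /andP[a0 a1].
  nra.
have c0 : 0 <= c by rewrite /c; apply: divr_ge0; [apply: mulr_ge0; [apply: ltW|] | apply: ltW].
have c1 : c <= g * r.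
  rewrite /c ler_pdivrMr //.
  have : 0 <= g * r by apply: mulr_ge0; [apply: ltW|].
  move: (g * r) => x; nra.
clearbody c.
rewrite /eucl_norm (eq_bigr _ (fun i _ => congr1 (fun x => x ^+ 2) (LE i))).
under eq_bigr => i _ do rewrite exprMn.
rewrite -mulr_sumr ler_pdivrMr //.
have -> : Num.sqrt 2 * r ^+ 2 * g = Num.sqrt ((g * Num.sqrt 2 * r ^+ 2) ^+ 2).
  rewrite sqrtr_sqr ger0_norm; first by ring.
  apply: mulr_ge0; [apply: mulr_ge0; [apply: ltW|apply: sqrtr_ge0]|apply: sqr_ge0].
try exact hg. rewrite ler_sqrt; last by apply: sqr_ge0.
rewrite !exprMn sqr_sqrtr // sqrrN.
have hh : 0 <= \sum_(i < d) H i ^+ 2 by apply: sumr_ge0 => i _; apply: sqr_ge0.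
have hc : c ^+ 2 <= (g * r) ^+ 2 by apply: ler_pM.
have hc0 : 0 <= c ^+ 2 by apply: sqr_ge0.
have hgr : 0 <= (g * r) ^+ 2 by apply: sqr_ge0.
move: hc hc0 hgr; rewrite !exprMn.
move: (c ^+ 2) (\sum_(i < d) H i ^+ 2) hh HS => x y hy hx hxc hx0.
move: (g ^+ 2) (r ^+ 2) hxc hx => G Q hxc hx hGQ.
have h1 : 0 <= (G * Q - x) * y by apply: mulr_ge0; lra.
have h2 : 0 <= G * Q * (2 * Q - y) by apply: mulr_ge0; lra.
nra.
Qed.
Theorem lemma3p2 (R : realType) (dT : measure_display) (T : measurableType dT)
  (d : nat) (hd : (1 < d)%N) (I : T -> 'I_d)
  (hI : forall i : 'I_d, measurable (I @^-1` [set i]))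
  (rho : R -> R) (hrho_meas : measurable_fun (`]0, 1[ : set R) rho)
  (hrho_pos : forall u : R, 0 < u < 1 -> 0 < rho u)
  (tt : nat -> 'I_d -> R) (X : nat -> T) (gamma : nat -> R)
  (htt_pos : forall n i, 0 < tt n i)
  (hgamma : forall n, 0 < gamma n.+1)
  (hrec : forall n i, tt n.+1 i =
     tt n i * (1 + gamma n.+1 * (rho (normalize (tt n) i) / normalize (tt n) i)
                   * strat_ind R I i (X n.+1))) :
  exists Lambda : nat -> 'I_d -> R,
    (forall n i, normalize (tt n.+1) i =
        normalize (tt n) i + gamma n.+1 * Hfun I rho (X n.+1) (normalize (tt n)) i
        + gamma n.+1 * Lambda n.+1 i) /\
    (ereal_sup (range (fun n : nat => (eucl_norm (Lambda n.+1) / gamma n.+1)%R%:E))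
      <= (Num.sqrt (2 : R))%:E *
         (ereal_sup ((fun u : R => (rho u)%:E) @` ([set` `]0, 1[%R] : set R))
          * ereal_sup ((fun u : R => (rho u)%:E) @` ([set` `]0, 1[%R] : set R))))%E.
Proof.
pose Lam m i := (normalize (tt m) i - normalize (tt m.-1) i
   - gamma m * Hfun I rho (X m) (normalize (tt m.-1)) i) / gamma m.
exists Lam; split.
  move=> n i; rewrite /Lam /=.
  field; exact: lt0r_neq0.
apply: ge_ereal_sup => _ [n _ <-].
set s := ereal_sup _.
set k := I (X n.+1).
have /andP[hk0 hk1] := @helper1 R d hd (tt n) k (htt_pos n).
have rpos := hrho_pos (normalize (tt n) k) (introT andP (conj hk0 hk1)).
have b : eucl_norm (Lam n.+1) / gamma n.+1 <= Num.sqrt 2 * rho (normalize (tt n) k) ^+ 2.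
  apply: (@helper2 R d rho (tt n) (tt n.+1) k (gamma n.+1) (htt_pos n) (hgamma n) (ltW rpos)).
  exact: hrec.
have rs : ((rho (normalize (tt n) k))%:E <= s)%E.
  apply: ereal_sup_ubound; exists (normalize (tt n) k) => //=.
  by rewrite in_itv /= hk0 hk1.
move: rs b; case: s => [x| |] //=.
- rewrite lee_fin => hx b; rewrite -!EFinM lee_fin.
  apply: (le_trans b); apply: ler_wpM2l; first exact: sqrtr_ge0.
  rewrite expr2; apply: ler_pM => //; exact: ltW.
- move=> _ _; rewrite mulyy muleC gt0_mulye ?leey //.


Qed.
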